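(* In the algebra $(\mathbb Z,+,\mathbb Z)$, the monolinear proportion relation $::_m$ satisfies, for all $a,b,c,d,e,f\in\mathbb Z$: p-reflexivity $a:b::_m a:b$; p-symmetry $a:b::_m c:d\iff c:d::_m a:b$; inner p-symmetry $a:b::_m c:d\iff b:a::_m d:c$; p-determinism $a:a::_m a:d\iff d=a$; inner p-reflexivity $a:a::_m c:c$; central permutation $a:b::_m c:d\iff a:c::_m b:d$; strong inner p-reflexivity ($a:a::_m c:d\Rightarrow d=c$); strong p-reflexivity ($a:b::_m a:d\Rightarrow d=b$); p-transitivity ($a:b::_m c:d$ and $c:d::_m e:f$ imply $a:b::_m e:f$); inner p-transitivity ($a:b::_m c:d$ and $b:e::_m d:f$ imply $a:e::_m c:f$); central p-transitivity ($a:b::_m b:c$ and $b:c::_m c:d$ imply $a:b::_m c:d$). However, p-commutativity ($a:b::_m b:a$ for all $a,b$) fails.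
   Context: $(\mathbb Z,+,\mathbb Z)$ is the algebra with universe $\mathbb Z$, addition, and every integer as a constant. A justification is a pair of terms $s\to t$ with the variables of $t$ among those of $s$; monolinear justifications are those where $s,t$ contain only one fixed variable $x$, occurring at most once in $s$ and at most once in $t$. $\uparrow^m(a\to b)$ is the set of monolinear justifications $s\to t$ with $a=s(\mathbf o)$, $b=t(\mathbf o)$ for some value $\mathbf o$; $\uparrow^m(a\to b:\!\cdot\,c\to d):=\uparrow^m(a\to b)\cap\uparrow^m(c\to d)$. A monolinear justification is trivial if it lies in all sets $\uparrow^m(a'\to b':\!\cdot\,c'\to d')$. $a\to b:\!\cdot_m\,c\to d$ holds iff either (i) all justifications in $\uparrow^m(a\to b)\cup\uparrow^m(c\to d)$ are trivial, or (ii) $J_d:=\uparrow^m(a\to b:\!\cdot\,c\to d)$ contains a non-trivial justification and for every $d'$, $J_d\subseteq J_{d'}$ implies $J_{d'}$ contains a non-trivial justification and $J_{d'}\subseteq J_d$ (ignoring trivial justifications). $a:b::_m c:d$ iff $a\to b:\!\cdot_m\,c\to d$, $b\to a:\!\cdot_m\,d\to c$, $c\to d:\!\cdot_m\,a\to b$, $d\to c:\!\cdot_m\,b\to a$ all hold. *)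

(* Defs.v *)
From Stdlib Require Import ZArith Arith.
Open Scope Z_scope.

(* Terms of the algebra (Z, +, Z) in the single fixed variable x:
   the variable, an integer constant, or a sum of two terms. *)
Inductive term : Type :=
| TVar : term
| TConst : Z -> term
| TAdd : term -> term -> term.

Fixpoint occ (t : term) : nat :=
  match t with
  | TVar => 1%nat
  | TConst _ => 0%nat
  | TAdd s u => (occ s + occ u)%nat
  end.

Fixpoint eval (o : Z) (t : term) : Z :=
  match t with
  | TVar => o
  | TConst k => k
  | TAdd s u => eval o s + eval o u
  end.

Definition justification := (term * term)%type.

Definition monolinear (j : justification) : Prop :=
  (occ (fst j) <= 1)%nat /\ (occ (snd j) <= 1)%nat /\
  ((0 < occ (snd j))%nat -> (0 < occ (fst j))%nat).

Definition up_m (a b : Z) (j : justification) : Prop :=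
  monolinear j /\ exists o, eval o (fst j) = a /\ eval o (snd j) = b.

Definition up_m2 (a b c d : Z) (j : justification) : Prop :=
  up_m a b j /\ up_m c d j.

Definition trivial_j (j : justification) : Prop :=
  monolinear j /\ forall a' b' c' d', up_m2 a' b' c' d' j.

Definition has_nontrivial (J : justification -> Prop) : Prop :=
  exists j, J j /\ ~ trivial_j j.

Definition subset_nt (J K : justification -> Prop) : Prop :=
  forall j, J j -> ~ trivial_j j -> K j.

Definition arrow_m (a b c d : Z) : Prop :=
  (forall j, (up_m a b j \/ up_m c d j) -> trivial_j j) \/
  (has_nontrivial (up_m2 a b c d) /\
   forall d', subset_nt (up_m2 a b c d) (up_m2 a b c d') ->
     has_nontrivial (up_m2 a b c d') /\ subset_nt (up_m2 a b c d') (up_m2 a b c d)).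

Definition prop_m (a b c d : Z) : Prop :=
  arrow_m a b c d /\ arrow_m b a d c /\ arrow_m c d a b /\ arrow_m d c b a.

(* Main.v *)
Require Import Defs.
From Stdlib Require Import ZArith Lia Setoid.
Open Scope Z_scope.

Lemma eval_lin : forall t o, eval o t = eval 0 t + Z.of_nat (occ t) * o.
Proof.
  induction t; intros o; cbn [eval occ].
  - change (Z.of_nat 1) with 1; ring.
  - change (Z.of_nat 0) with 0; ring.
  - rewrite IHt1, IHt2, Nat2Z.inj_add. ring.
Qed.

Lemma up_det : forall c d d' j, up_m c d j -> up_m c d' j -> d = d'.
Proof.
  intros c d d' [s t] [[Hs [Ht Hst]] [o [H1 H2]]] [_ [o' [H3 H4]]].
  simpl in *.
  rewrite eval_lin in H1, H2, H3, H4.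
  destruct (occ s) as [|[|]]; destruct (occ t) as [|[|]]; simpl in *; try lia.
Qed.

Lemma no_trivial : forall j, ~ trivial_j j.
Proof.
  intros j [_ H]. destruct (H 0 0 0 1) as [H1 H2].
  pose proof (up_det _ _ _ _ H1 H2). lia.
Qed.

Lemma arrow_iff : forall a b c d, arrow_m a b c d <-> (d = b \/ d - c = b - a).
Proof.
  intros a b c d; split.
  - intros [H|[[j [[[Hm [o [H1 H2]]] [_ [o' [H3 H4]]]] _]] _]].
    + exfalso. apply (no_trivial (TConst a, TConst b)). apply H. left.
      split. unfold monolinear; simpl; lia. exists 0; simpl; auto.
    + destruct j as [s t]. destruct Hm as [Hs [Ht Hst]]. simpl in *.
      rewrite eval_lin in H1, H2, H3, H4.
      destruct (occ s) as [|[|]]; destruct (occ t) as [|[|]]; simpl in *; try lia.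
  - intros H. right.
    assert (Hne : has_nontrivial (up_m2 a b c d)).
    { destruct H as [H|H].
      - exists (TVar, TConst b). split; [|apply no_trivial].
        split; (split; [unfold monolinear; simpl; lia|]).
        + exists a; simpl; auto.
        + exists c; simpl; auto.
      - exists (TVar, TAdd TVar (TConst (b - a))). split; [|apply no_trivial].
        split; (split; [unfold monolinear; simpl; lia|]).
        + exists a; simpl; split; lia.
        + exists c; simpl; split; lia. }
    split; [exact Hne|].
    intros d' Hsub.
    destruct Hne as [j [Hj Hnt]] eqn:E.
    pose proof (Hsub j Hj Hnt) as Hj'.
    assert (d = d') by (apply (up_det c d d' j); [apply Hj|apply Hj']).
    subst d'. split; [exists j; auto|]. intros k Hk _; exact Hk.
Qed.

Lemma prop_iff : forall a b c d, prop_m a b c d <-> a - b = c - d.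
Proof.
  intros a b c d. unfold prop_m. rewrite !arrow_iff. lia.
Qed.

Theorem mainTheorem5 :
  (* p-reflexivity *)
  (forall a b, prop_m a b a b) /\
  (* p-symmetry *)
  (forall a b c d, prop_m a b c d <-> prop_m c d a b) /\
  (* inner p-symmetry *)
  (forall a b c d, prop_m a b c d <-> prop_m b a d c) /\
  (* p-determinism *)
  (forall a d, prop_m a a a d <-> d = a) /\
  (* inner p-reflexivity *)
  (forall a c, prop_m a a c c) /\
  (* central permutation *)
  (forall a b c d, prop_m a b c d <-> prop_m a c b d) /\
  (* strong inner p-reflexivity *)
  (forall a c d, prop_m a a c d -> d = c) /\
  (* strong p-reflexivity *)
  (forall a b d, prop_m a b a d -> d = b) /\
  (* p-transitivity *)
  (forall a b c d e f, prop_m a b c d -> prop_m c d e f -> prop_m a b e f) /\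
  (* inner p-transitivity *)
  (forall a b c d e f, prop_m a b c d -> prop_m b e d f -> prop_m a e c f) /\
  (* central p-transitivity *)
  (forall a b c d, prop_m a b b c -> prop_m b c c d -> prop_m a b c d) /\
  (* p-commutativity fails *)
  ~ (forall a b, prop_m a b b a).
Proof.
  repeat setoid_rewrite prop_iff.
  repeat split; intros; try lia.
  intro H. specialize (H 0 1). lia.
Qed.
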